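(* Let $C\subseteq\mathbb{F}_q^n$ be a degenerated code. Then for any code $D\subseteq\mathbb{F}_q^n$, the code $C*D$ is degenerated.
   Context: Codes are $\mathbb{F}_q$-linear subspaces of $\mathbb{F}_q^n$; $C*D$ is the span of the componentwise products $\mathbf{c}*\mathbf{d}$. The stabiliser of a code $H$ is $\mathrm{Stab}(H)=\{\mathbf{x}\in\mathbb{F}_q^n:\mathbf{x}*H\subseteq H\}$. A code $H$ is degenerated if $\dim\mathrm{Stab}(H)>1$; equivalently (a known result), $H$ is a direct sum of nonzero subcodes with disjoint supports or every generator matrix of $H$ has a zero column. *)

(* Defs.v *)
From HB Require Import structures.
From mathcomp Require Import all_boot all_order all_algebra.
Set Implicit Arguments. Unset Strict Implicit. Unset Printing Implicit Defensive.
Import GRing.Theory.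
Local Open Scope ring_scope.

Definition code (F : finFieldType) (n : nat) := {vspace 'rV[F]_n}.

Definition cwprod (F : finFieldType) (n : nat) (x y : 'rV[F]_n) : 'rV[F]_n :=
  \row_i (x 0 i * y 0 i).

Definition schur (F : finFieldType) (n : nat) (C D : code F n) : code F n :=
  <<[seq cwprod x y | x <- [seq x <- enum [set: 'rV[F]_n] | x \in C],
                      y <- [seq y <- enum [set: 'rV[F]_n] | y \in D]]>>%VS.

(* Stab(H) = { x | x * H \subseteq H } (a subspace, here as its span) *)
Definition stab (F : finFieldType) (n : nat) (H : code F n) : code F n :=
  <<[seq x <- enum [set: 'rV[F]_n] |
      [forall h : 'rV[F]_n, (h \in H) ==> (cwprod x h \in H)]]>>%VS.

Definition degenerated (F : finFieldType) (n : nat) (H : code F n) : Prop :=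
  (1 < \dim (stab H))%N.

(* Main.v *)
Require Import Defs.
From mathcomp Require Import all_boot all_order all_algebra.
Import GRing.Theory.
Local Open Scope ring_scope.

Lemma cwprod_mx (F : finFieldType) (n : nat) (x h : 'rV[F]_n) :
  cwprod x h = h *m diag_mx x.
Proof.
by apply/rowP => i; rewrite mul_mx_diag !mxE mulrC.
Qed.

Lemma stab_mem (F : finFieldType) (n : nat) (H : code F n) (x : 'rV[F]_n) :
  (forall h, h \in H -> cwprod x h \in H) -> x \in stab H.
Proof.
move=> Hx; apply: memv_span; rewrite mem_filter mem_enum in_setT andbT.
by apply/forallP => h; apply/implyP => /Hx.
Qed.

Lemma stab_memE (F : finFieldType) (n : nat) (H : code F n) (x : 'rV[F]_n) :
  [forall h : 'rV[F]_n, (h \in H) ==> (cwprod x h \in H)] ->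
  forall h, h \in H -> cwprod x h \in H.
Proof. by move=> /forallP Hx h hH; have := Hx h; rewrite hH. Qed.

Lemma span_cw (F : finFieldType) (n : nat) (X : seq 'rV[F]_n) (U : code F n)
  (x : 'rV[F]_n) :
  (forall y, y \in X -> cwprod x y \in U) ->
  forall h, h \in <<X>>%VS -> cwprod x h \in U.
Proof.
move=> HX h; rewrite -[X]/(tval (in_tuple X)) => /coord_span ->.
rewrite cwprod_mx mulmx_suml; apply: rpred_sum => i _.
rewrite -scalemxAl -cwprod_mx; apply: rpredZ; apply: HX.
by apply: mem_nth.
Qed.

Theorem lemma6p5 (F : finFieldType) (n : nat) (C D : code F n) :
  degenerated C -> degenerated (schur C D).
Proof.
rewrite /degenerated => H; apply: (leq_trans H); apply: dimvS.
apply/span_subvP => x; rewrite mem_filter mem_enum in_setT andbT => /stab_memE Hx.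
apply: stab_mem; apply: span_cw => y /allpairsP [[c d] /= [hc hd ->]].
have -> : cwprod x (cwprod c d) = cwprod (cwprod x c) d.
  by apply/rowP => i; rewrite !mxE mulrA.
apply: memv_span; apply: allpairs_f => //.
move: hc; rewrite mem_filter => /andP [hc _].
by rewrite mem_filter Hx //= mem_enum in_setT.
Qed.
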